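(* Let $\Delta$ be an alphabet, $\zeta:\Sigma\to 2^{\mathsf{SP}(\Delta)}$ an atomic substitution, and $L,L'\subseteq\Sigma^*$. Then $\zeta(L\cap L')=\zeta(L)\cap\zeta(L')$, $\zeta(L\setminus L')=\zeta(L)\setminus\zeta(L')$, and $\zeta(L)=\emptyset$ if and only if $L=\emptyset$.
   Context: Pomsets over an alphabet are isomorphism classes of finite labelled posets; $1$ is the empty pomset; $U\cdot V$ is the disjoint union with all elements of $U$ below all elements of $V$; $U\parallel V$ is the disjoint union of orders; these lift pointwise to sets of pomsets. $\mathsf{SP}(\Delta)$ is the smallest set containing $1$ and the one-element pomsets over $\Delta$, closed under $\cdot,\parallel$. Words over $\Sigma$ are identified with pomsets built from one-element pomsets using only $\cdot$; $\Sigma^*$ is the set of words. A substitution $\zeta:\Sigma\to 2^{\mathsf{SP}(\Delta)}$ is extended by $\zeta(1)=\{1\}$, $\zeta(U\cdot V)=\zeta(U)\cdot\zeta(V)$, $\zeta(U\parallel V)=\zeta(U)\parallel\zeta(V)$, and to languages by $\zeta(L)=\bigcup_{U\in L}\zeta(U)$. A pomset $U$ is a sequential prime if it is non-empty and $U=V\cdot W$ implies $V=1$ or $W=1$. $\zeta$ is atomic if (i) for each $a\in\Sigma$, $\zeta(a)$ consists only of sequential primes, and (ii) for $a,b\in\Sigma$, $\zeta(a)\cap\zeta(b)\ne\emptyset$ iff $a=b$. *)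

(* Defs.v *)
From mathcomp Require Import all_boot.

Set Implicit Arguments. Unset Strict Implicit. Unset Printing Implicit Defensive.

(* Pomsets are isomorphism classes of these; we work with
   representatives and always reason up to [iso]. *)
Record lposet (D : Type) := LPoset {
  lp_n : nat;
  lp_lab : 'I_lp_n -> D;
  lp_le : rel 'I_lp_n;
  lp_refl : reflexive lp_le;
  lp_anti : antisymmetric lp_le;
  lp_trans : transitive lp_le }.
Arguments lp_n {D} l.
Arguments lp_lab {D} l _.
Arguments lp_le {D} l _ _.
Arguments lp_refl {D} l _.
Arguments lp_anti {D} l _ _ _.
Arguments lp_trans {D} l _ _ _ _ _.

Section Pomsets.
Variable D : Type.

Definition iso (U V : lposet D) : Prop :=
  exists f : 'I_(lp_n U) -> 'I_(lp_n V),
    [/\ bijective f,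
        (forall x, lp_lab V (f x) = lp_lab U x) &
        (forall x y, lp_le V (f x) (f y) = lp_le U x y)].

Definition ord0_elim (T : Type) (i : 'I_0) : T :=
  match (fun e : true = false => match e in _ = b return if b then True else False with erefl => I end) (etrans (esym (ltn_ord i)) (ltn0 i)) with end.

Definition lone : lposet D :=
  @LPoset D 0 (@ord0_elim D) (fun _ _ => true)
    (fun _ => erefl) (fun x _ _ => @ord0_elim _ x)
    (fun _ _ _ _ _ => erefl).

Definition lsingle (d : D) : lposet D :=
  @LPoset D 1 (fun _ => d) (fun _ _ => true)
    (fun _ => erefl)
    (fun x y _ => etrans (ord1 x) (esym (ord1 y)))
    (fun _ _ _ _ _ => erefl).

Section Comp.
Variables U V : lposet D.
Let m := lp_n U.
Let n := lp_n V.

Definition comp_lab (i : 'I_(m + n)) : D :=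
  match split i with inl a => lp_lab U a | inr b => lp_lab V b end.

Definition comp_le (b : bool) (i j : 'I_(m + n)) : bool :=
  match split i, split j with
  | inl a, inl a' => lp_le U a a'
  | inr c, inr c' => lp_le V c c'
  | inl _, inr _ => b
  | inr _, inl _ => false
  end.

Lemma comp_le_refl b : reflexive (comp_le b).
Proof. by move=> x; rewrite /comp_le; case: (split x) => a; apply: lp_refl. Qed.

Lemma comp_le_anti b : antisymmetric (comp_le b).
Proof.
move=> x y; rewrite -(splitK x) -(splitK y) /comp_le !unsplitK.
case: (split x) => a; case: (split y) => c //=; try by rewrite andbF.
- by move/lp_anti => ->.
- by move/lp_anti => ->.
Qed.

Lemma comp_le_trans b : transitive (comp_le b).
Proof.
move=> y x z; rewrite -(splitK x) -(splitK y) -(splitK z) /comp_le !unsplitK.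
case: (split x) => a; case: (split y) => c; case: (split z) => e //=;
  try exact: lp_trans.
Qed.

Definition lcomp (b : bool) : lposet D :=
  @LPoset D (m + n) comp_lab (comp_le b) (@comp_le_refl b)
    (@comp_le_anti b) (@comp_le_trans b).
End Comp.

Definition lseq (U V : lposet D) : lposet D := lcomp U V true.
Definition lpar (U V : lposet D) : lposet D := lcomp U V false.

(* Sets of pomsets are represented by isomorphism-closed predicates on
   labelled posets. *)
Definition pset := lposet D -> Prop.
Definition iso_closed (A : pset) : Prop :=
  forall U V, iso U V -> A U -> A V.

Definition pone : pset := fun U => iso U lone.
Definition pseqs (A B : pset) : pset :=
  fun U => exists V W, [/\ A V, B W & iso U (lseq V W)].

Inductive sp_term :=
| SP1 | SPatom of D | SPseq of sp_term & sp_term | SPpar of sp_term & sp_term.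

Fixpoint sp_interp (t : sp_term) : lposet D :=
  match t with
  | SP1 => lone
  | SPatom d => lsingle d
  | SPseq t1 t2 => lseq (sp_interp t1) (sp_interp t2)
  | SPpar t1 t2 => lpar (sp_interp t1) (sp_interp t2)
  end.

Definition is_SP (U : lposet D) : Prop := exists t, iso U (sp_interp t).

Definition seq_prime (U : lposet D) : Prop :=
  0 < lp_n U /\
  forall V W : lposet D, iso U (lseq V W) -> iso V lone \/ iso W lone.
End Pomsets.

Section Subst.
Variables (S D : Type).

Definition is_subst (zeta : S -> pset D) : Prop :=
  forall a, iso_closed (zeta a) /\ (forall U, zeta a U -> is_SP U).

(* extension to words (words = pomsets built from letters by .) *)
Fixpoint zeta_word (zeta : S -> pset D) (w : seq S) : pset D :=
  match w with
  | [::] => @pone D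
  | a :: w' => pseqs (zeta a) (zeta_word zeta w')
  end.

Definition zeta_lang (zeta : S -> pset D) (L : seq S -> Prop) : pset D :=
  fun U => exists2 w, L w & zeta_word zeta w U.

Definition atomic (zeta : S -> pset D) : Prop :=
  (forall a U, zeta a U -> seq_prime U) /\
  (forall a b, (exists U, zeta a U /\ zeta b U) <-> a = b).
End Subst.

(* Main.v *)
Require Import Defs.
From mathcomp Require Import all_boot.
Set Implicit Arguments. Unset Strict Implicit. Unset Printing Implicit Defensive.

Section Aux.
Variable D : Type.
Implicit Types U V W X : lposet D.

Lemma iso_refl U : iso U U.
Proof. exists id; split => //; exact: (@Bijective _ _ id id). Qed.

Lemma iso_sym U V : iso U V -> iso V U.
Proof.
case=> f [[g fK gK] Hl Hle]; exists g; split.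
- by exists f.
- by move=> y; rewrite -Hl gK.
- by move=> x y; rewrite -Hle !gK.
Qed.

Lemma iso_trans U V W : iso U V -> iso V W -> iso U W.
Proof.
case=> f1 [b1 l1 e1] [f2 [b2 l2 e2]]; exists (f2 \o f1); split.
- exact: bij_comp.
- by move=> x /=; rewrite l2 l1.
- by move=> x y /=; rewrite e2 e1.
Qed.

Lemma iso_size U V : iso U V -> lp_n U = lp_n V.
Proof. by case=> f [bf _ _]; have := bij_eq_card bf; rewrite !card_ord. Qed.

Lemma split_l m n (a : 'I_m) : split (lshift n a) = inl a.
Proof. exact: (unsplitK (inl _ a)). Qed.
Lemma split_r m n (a : 'I_n) : split (rshift m a) = inr a.
Proof. exact: (unsplitK (inr _ a)). Qed.

Definition isl m n (i : 'I_(m + n)) : bool := if split i is inl _ then true else false.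

Lemma isl_l m n (a : 'I_m) : isl (lshift n a). Proof. by rewrite /isl split_l. Qed.
Lemma isl_r m n (a : 'I_n) : isl (rshift m a) = false. Proof. by rewrite /isl split_r. Qed.

Lemma islP m n (i : 'I_(m + n)) : isl i -> exists a, i = lshift n a.
Proof. rewrite /isl; case: split_ordP => // j -> _; by exists j. Qed.
Lemma nislP m n (i : 'I_(m + n)) : ~~ isl i -> exists a, i = rshift m a.
Proof. rewrite /isl; case: split_ordP => // j -> _; by exists j. Qed.

Lemma comp_le_isl U V b (i j : 'I_(lp_n U + lp_n V)) :
  isl i -> ~~ isl j -> @comp_le _ U V b i j = b.
Proof. by move=> /islP [a ->] /nislP [c ->]; rewrite /comp_le split_l split_r. Qed.
Lemma comp_le_nisl U V b (i j : 'I_(lp_n U + lp_n V)) :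
  ~~ isl i -> isl j -> @comp_le _ U V b i j = false.
Proof. by move=> /nislP [a ->] /islP [c ->]; rewrite /comp_le split_l split_r. Qed.
Lemma comp_le_ll U V b a c : @comp_le _ U V b (lshift _ a) (lshift _ c) = lp_le U a c.
Proof. by rewrite /comp_le !split_l. Qed.
Lemma comp_le_rr U V b a c : @comp_le _ U V b (rshift _ a) (rshift _ c) = lp_le V a c.
Proof. by rewrite /comp_le !split_r. Qed.
Lemma comp_lab_l U V a : @comp_lab _ U V (lshift _ a) = lp_lab U a.
Proof. by rewrite /comp_lab split_l. Qed.
Lemma comp_lab_r U V a : @comp_lab _ U V (rshift _ a) = lp_lab V a.
Proof. by rewrite /comp_lab split_r. Qed.

Section Sub.
Variables (U : lposet D) (P : pred 'I_(lp_n U)).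
Definition sub_le (i j : 'I_#|P|) := lp_le U (enum_val i) (enum_val j).
Lemma sub_refl : reflexive sub_le. Proof. by move=> i; apply: lp_refl. Qed.
Lemma sub_anti : antisymmetric sub_le.
Proof. by move=> i j /lp_anti /enum_val_inj. Qed.
Lemma sub_trans : transitive sub_le.
Proof. by move=> i j k; apply: lp_trans. Qed.
Definition lsub : lposet D :=
  @LPoset D #|P| (fun i => lp_lab U (enum_val i)) sub_le sub_refl sub_anti sub_trans.
End Sub.

Lemma prime_split U (P : pred 'I_(lp_n U)) :
  seq_prime U -> (forall x y, P x -> ~~ P y -> lp_le U x y) ->
  (forall x, P x) \/ (forall x, ~~ P x).
Proof.
move=> [_ HU] HP.
pose g (i : 'I_(#|P| + #|predC P|)) : 'I_(lp_n U) :=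
  match split i with inl a => enum_val a | inr b => enum_val b end.
have ginj : injective g.
  move=> i j; rewrite /g -[i]splitK -[j]splitK !unsplitK.
  case: (split i) => a; case: (split j) => c.
  - by move/enum_val_inj => ->.
  - by move=> E; have := enum_valP a; have := enum_valP c; rewrite /= -E => /negP.
  - by move=> E; have := enum_valP a; have := enum_valP c; rewrite /= E => ? /negP.
  - by move/enum_val_inj => ->.
have gbij : bijective g.
  by apply: (inj_card_bij ginj); rewrite !card_ord cardC card_ord.
have H : iso (lseq (lsub P) (lsub (predC P))) U.
  exists g; split => //.
  - by move=> x; rewrite /= /comp_lab /g; case: (split x).
  - move=> x y; rewrite /= /comp_le /g; case: (split x) => a; case: (split y) => c //.
    + by apply: HP; [exact: enum_valP | have := enum_valP c].
    + apply/negbTE/negP => Hle.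
      have Hca := HP _ _ (enum_valP c) (enum_valP a).
      have E := lp_anti U _ _ (introT andP (conj Hle Hca)).
      have Pc := enum_valP c; have nPa := enum_valP a; rewrite E in nPa; move: nPa Pc. by rewrite !unfold_in /= => /negP.
case: (HU _ _ (iso_sym H)) => /iso_size /= E; [right | left] => x.
- apply/negP => Px; have : 0 < #|P| by apply/card_gt0P; exists x.
  by rewrite E.
- apply/negPn/negP => Px; have : 0 < #|predC P| by apply/card_gt0P; exists x.
  by rewrite E.
Qed.


Lemma left_pres V1 W1 V2 W2
  (h : 'I_(lp_n V1 + lp_n W1) -> 'I_(lp_n V2 + lp_n W2)) hinv :
  seq_prime V1 -> 0 < lp_n V2 -> cancel hinv h ->
  (forall x y, @comp_le _ V2 W2 true (h x) (h y) = @comp_le _ V1 W1 true x y) ->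
  forall a, isl (h (lshift _ a)).
Proof.
move=> pV1 pos2 hK Hle.
have [] := @prime_split V1 (fun a => isl (h (lshift (lp_n W1) a))) pV1.
- move=> x y Px nPy.
  rewrite -(@comp_le_ll V1 W1 true) -Hle.
  exact: comp_le_isl.
- done.
- move=> none; exfalso.
  pose a0 : 'I_(lp_n V1) := Ordinal (proj1 pV1).
  pose c0 : 'I_(lp_n V2) := Ordinal pos2.
  pose x := hinv (lshift (lp_n W2) c0).
  case Hx: (isl x).
  + move/islP: Hx => [a Ea]. have := none a. by rewrite -Ea /x hK isl_l.
  + have := Hle (lshift _ a0) x.
    rewrite /x hK (comp_le_nisl _ (none a0) (isl_l _ _)).
    by rewrite (comp_le_isl _ (isl_l _ _)) // Hx.
Qed.

Definition lget m n (i : 'I_(m + n)) (d : 'I_m) := if split i is inl c then c else d.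
Definition rget m n (i : 'I_(m + n)) (d : 'I_n) := if split i is inr c then c else d.
Lemma lgetE m n (a d : 'I_m) : lget (lshift n a) d = a.
Proof. by rewrite /lget split_l. Qed.
Lemma rgetE m n (a d : 'I_n) : rget (rshift m a) d = a.
Proof. by rewrite /rget split_r. Qed.

Lemma seq_cancel V1 W1 V2 W2 : seq_prime V1 -> seq_prime V2 ->
  iso (lseq V1 W1) (lseq V2 W2) -> iso V1 V2 /\ iso W1 W2.
Proof.
move=> p1 p2 Hiso; have Esz := iso_size Hiso.
move: Hiso => [h [[hinv hK1 hK2] Hlab Hle0]].
have Hle : forall x y, @comp_le _ V2 W2 true (h x) (h y) = @comp_le _ V1 W1 true x y
  := Hle0.
have Hle2 : forall x y, @comp_le _ V1 W1 true (hinv x) (hinv y) = @comp_le _ V2 W2 true x y.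
  by move=> x y; rewrite -Hle !hK2.
have L1 := left_pres p1 (proj1 p2) hK2 Hle.
have L2 := left_pres p2 (proj1 p1) hK1 Hle2.
have R1 : forall b, ~~ isl (h (rshift _ b)).
  move=> b; apply/negP => /islP [c Ec]. have := L2 c. by rewrite -Ec hK1 isl_r.
have R2 : forall b, ~~ isl (hinv (rshift _ b)).
  move=> b; apply/negP => /islP [c Ec]. have := L1 c. by rewrite -Ec hK2 isl_r.
pose a0 : 'I_(lp_n V1) := Ordinal (proj1 p1).
pose c0 : 'I_(lp_n V2) := Ordinal (proj1 p2).
pose f a := lget (h (lshift _ a)) c0.
pose g c := lget (hinv (lshift _ c)) a0.
have hE : forall a, h (lshift _ a) = lshift _ (f a).
  by move=> a; have [c Ec] := islP (L1 a); rewrite /f Ec lgetE.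
have gE : forall c, hinv (lshift _ c) = lshift _ (g c).
  by move=> c; have [a Ea] := islP (L2 c); rewrite /g Ea lgetE.
have isoV : iso V1 V2.
  exists f; split.
  - exists g => a.
    + by apply: (@lshift_inj _ (lp_n W1)); rewrite -gE -hE hK1.
    + by apply: (@lshift_inj _ (lp_n W2)); rewrite -hE -gE hK2.
  - by move=> a; have := Hlab (lshift _ a); rewrite /= hE !comp_lab_l.
  - by move=> a b; have := Hle (lshift _ a) (lshift _ b); rewrite !hE !comp_le_ll.
split => //.
have Ek : lp_n W1 = lp_n W2.
  by apply/eqP; rewrite -(eqn_add2l (lp_n V1)) {2}(iso_size isoV); apply/eqP.
pose f' b := rget (h (rshift _ b)) (cast_ord Ek b).
pose g' c := rget (hinv (rshift _ c)) (cast_ord (esym Ek) c).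
have hE' : forall b, h (rshift _ b) = rshift _ (f' b).
  by move=> b; have [c Ec] := nislP (R1 b); rewrite /f' Ec rgetE.
have gE' : forall c, hinv (rshift _ c) = rshift _ (g' c).
  by move=> c; have [a Ea] := nislP (R2 c); rewrite /g' Ea rgetE.
exists f'; split.
- exists g' => a.
  + by apply: (@rshift_inj (lp_n V1)); rewrite -gE' -hE' hK1.
  + by apply: (@rshift_inj (lp_n V2)); rewrite -hE' -gE' hK2.
- by move=> a; have := Hlab (rshift _ a); rewrite /= hE' !comp_lab_r.
- by move=> a b; have := Hle (rshift _ a) (rshift _ b); rewrite !hE' !comp_le_rr.
Qed.

End Aux.

Section Z.
Variables (S D : Type) (zeta : S -> pset D).
Hypotheses (Hs : is_subst zeta) (Ha : atomic zeta).

Lemma lone_size : lp_n (lone D) = 0. Proof. by []. Qed.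

Lemma word_inj w U : zeta_word zeta w U ->
  forall v U', zeta_word zeta v U' -> iso U U' -> w = v.
Proof.
elim: w U => [|a w IH] U /=.
- move=> HU [|b v] U' //= [V [W [HV _ HU']]] HUU'.
  have := iso_size HUU'.
  rewrite (iso_size HU') (iso_size HU) /=.
  by have := proj1 (proj1 Ha _ _ HV); case: (lp_n V).
- move=> [V [W [HV HW HU]]] [|b v] U' /=.
  + move=> HU' HUU'.
    have := iso_size (iso_trans HUU' HU').
    rewrite (iso_size HU) /=.
    by have := proj1 (proj1 Ha _ _ HV); case: (lp_n V).
  + move=> [V' [W' [HV' HW' HU']]] HUU'.
    have [iV iW] := seq_cancel (proj1 Ha _ _ HV) (proj1 Ha _ _ HV')
      (iso_trans (iso_sym HU) (iso_trans HUU' HU')).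
    have ab : a = b.
      apply/(proj2 Ha a b); exists V; split => //.
      exact: (proj1 (Hs b) _ _ (iso_sym iV) HV').
    by rewrite ab (IH _ HW _ _ HW' iW).
Qed.

Lemma word_ne w : exists U, zeta_word zeta w U.
Proof.
elim: w => [|a w [W HW]] /=; first by exists (lone D); exact: iso_refl.
have [V [HV _]] := proj2 (proj2 Ha a a) erefl.
by exists (lseq V W); exists V, W; split => //; exact: iso_refl.
Qed.
End Z.

Theorem lemma3p12 (Sigma Delta : finType) (zeta : Sigma -> pset Delta)
  (L L' : seq Sigma -> Prop) :
  is_subst zeta -> atomic zeta ->
  [/\ (forall U, zeta_lang zeta (fun w => L w /\ L' w) U <->
                 (zeta_lang zeta L U /\ zeta_lang zeta L' U)),
      (forall U, zeta_lang zeta (fun w => L w /\ ~ L' w) U <->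
                 (zeta_lang zeta L U /\ ~ zeta_lang zeta L' U)) &
      ((forall U, ~ zeta_lang zeta L U) <-> (forall w, ~ L w))].
Proof.
move=> Hs Ha; split.
- move=> U; split.
  + by case=> w [Lw L'w] Hw; split; exists w.
  + case=> [[w Lw Hw] [w' L'w Hw']].
    have E := word_inj Hs Ha Hw Hw' (iso_refl _).
    by exists w => //; split => //; rewrite E.
- move=> U; split.
  + case=> w [Lw nL'w] Hw; split; first by exists w.
    case=> w' L'w Hw'; apply: nL'w.
    by rewrite (word_inj Hs Ha Hw Hw' (iso_refl _)).
  + case=> [[w Lw Hw] nL]; exists w => //; split => // L'w.
    by apply: nL; exists w.
- split.
  + move=> H w Lw; have [U HU] := word_ne Ha w.
    by apply: (H U); exists w.
  + by move=> H U [w Lw _]; exact: (H w).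
Qed.
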